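(* Let $n\ge2$ and let $\xi_n:S^1\to M_n(\mathbb C)$ be given by $\xi_n(z)_{ij}=z^{j-i}$ ($1\le i,j\le n$). Then $\xi_n$ is entangled in $C(S^1)^{(n)}\otimes_{\min}C(S^1)_{(n)}$: it is positive there, but there do not exist $k\in\mathbb N$, positive semidefinite Toeplitz matrices $t_1,\dots,t_k\in C(S^1)^{(n)}$ and functions $f_1,\dots,f_k\in C(S^1)_{(n)}$ with $f_j(z)\ge0$ for all $z$, such that $\xi_n=\sum_{j=1}^k t_j\otimes f_j$.
   Context: $C(S^1)^{(n)}\subseteq M_n(\mathbb C)$ is the space of Toeplitz matrices $[\tau_{k-\ell}]$. $C(S^1)_{(n)}$ is the operator system of continuous functions $f$ on the unit circle $S^1$ with Fourier coefficients $\hat f(k)=0$ for $|k|\ge n$, positivity being pointwise. $C(S^1)^{(n)}\otimes_{\min}C(S^1)_{(n)}$ is identified with continuous functions $F:S^1\to C(S^1)^{(n)}$ with entries in $C(S^1)_{(n)}$ (via $t\otimes f\leftrightarrow z\mapsto f(z)t$), positive iff $F(z)$ is positive semidefinite for each $z$. *)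

(* Defs.v *)
From mathcomp Require Import all_boot all_order all_algebra.
From mathcomp Require Import complex.
From mathcomp Require Import reals.
Set Implicit Arguments. Unset Strict Implicit. Unset Printing Implicit Defensive.
Import Order.TTheory GRing.Theory Num.Theory.
Local Open Scope ring_scope.

Section Defs.
Variable R : realType.
Local Notation C := (R[i]).

Definition adjmx (n : nat) (A : 'M[C]_n) : 'M[C]_n := (map_mx conjc A)^T.

Definition psd (n : nat) (A : 'M[C]_n) : Prop :=
  adjmx A = A /\ forall v : 'cV[C]_n, 0 <= ((map_mx conjc v)^T *m A *m v) 0 0.

Definition toeplitz (n : nat) (t : 'M[C]_n) : Prop :=
  exists tau : int -> C, forall i j : 'I_n, t i j = tau (i%:Z - j%:Z).

Definition on_circle (z : C) : Prop := `|z| = 1.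

(* C(S^1)_(n): (continuous) functions on S^1 whose Fourier coefficients
   vanish for |k| >= n, i.e. trigonometric polynomials sum_{|k|<n} c_k z^k *)
Definition trig_poly (n : nat) (f : C -> C) : Prop :=
  exists c : int -> C, forall z, on_circle z ->
    f z = \sum_(0 <= k < (2 * n).-1) c (k%:Z - n.-1%:Z) * z ^ (k%:Z - n.-1%:Z).

Definition xi (n : nat) (z : C) : 'M[C]_n :=
  \matrix_(i < n, j < n) z ^ (j%:Z - i%:Z).
End Defs.

(* Main.v *)
Require Import Defs.
From mathcomp Require Import all_boot all_order all_algebra.
From mathcomp Require Import complex.
From mathcomp Require Import reals.
From mathcomp Require Import ring lra.
Import Order.TTheory GRing.Theory Num.Theory.
Local Open Scope ring_scope.
Local Open Scope complex_scope.
Set Implicit Arguments. Unset Strict Implicit. Unset Printing Implicit Defensive.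

Section Aux.
Variable R : realType.
Local Notation C := (R[i]).
Local Notation Re := (@complex.Re R).
Local Notation Im := (@complex.Im R).

Lemma circle_re_im (z : C) : on_circle z -> (Re z)^+2 + (Im z)^+2 = 1 :> R.
Proof.
rewrite /on_circle normc_def => -[] h.
have h0 : 0 <= (Re z)^+2 + (Im z)^+2 :> R by nra.
by rewrite -(sqr_sqrtr h0) h expr1n.
Qed.

Lemma circle_conj (z : C) : on_circle z -> conjc z = z^-1.
Proof.
move=> /circle_re_im h.
have hz : z != 0.
  apply/negP => /eqP hz; move: h; rewrite hz /= expr0n /= addr0 => /eqP.
  by rewrite eq_sym oner_eq0.
apply: (mulfI hz); rewrite mulfV //.
case: z h {hz} => a b /= h; simpc.
apply/eqP; rewrite eq_complex /=; apply/andP; split; apply/eqP.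
  by rewrite -!expr2 h.
ring.
Qed.

Lemma circle_neq0 (z : C) : on_circle z -> z != 0.
Proof.
move=> /circle_re_im h; apply/negP => /eqP hz; move: h; rewrite hz /= expr0n /= addr0 => /eqP.
by rewrite eq_sym oner_eq0.
Qed.

Lemma xi_psd n (z : C) : on_circle z -> psd (xi n z).
Proof.
move=> hc; have hz := circle_neq0 hc; have hcj := circle_conj hc.
have ex : forall i j : 'I_n, xi n z i j = z ^+ j * (conjc z) ^+ i.
  move=> i j; rewrite mxE hcj exprVn exprnN exprnP -expfzDr //.
have ex' : forall i j : 'I_n, z ^ (j%:Z - i%:Z) = z ^+ j * (conjc z) ^+ i.
  by move=> i j; rewrite -ex mxE.
split.
  apply/matrixP => i j; rewrite !mxE ex' ex' rmorphM !rmorphXn.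
  by rewrite /= conjcK mulrC.
move=> v.
set s := \sum_(b < n) z ^+ b * v b 0.
suff -> : (((map_mx conjc v))^T *m xi n z *m v) 0 0 = s * conjc s by apply: mulcJ_ge0.
transitivity (\sum_(b < n) \sum_(a < n) conjc (v a 0) * (z^+b * conjc z ^+ a) * v b 0).
  rewrite mxE; apply eq_bigr => b _; rewrite mxE mulr_suml; apply eq_bigr => a _.
  by rewrite !mxE ex'.
rewrite exchange_big /= mulrC rmorph_sum mulr_suml; apply eq_bigr => a _.
rewrite mulr_sumr; apply eq_bigr => b _; rewrite rmorphM rmorphXn; ring.
Qed.

Lemma quad0 (a c : R) : 0 <= a -> (forall s, 0 <= 2*s*c + a*s^+2) -> c = 0.
Proof.
move=> ha H; have := H (- c / (a + 1)); set s := - c / (a + 1) => hs.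
have hc : c = - s * (a + 1) by rewrite /s mulNr divfK ?opprK // gt_eqF // ltr_pwDr.
nra.
Qed.

Lemma key_c (A B B' D z : C) : conjc A = A -> B' = conjc B ->
  (forall u w, 0 <= conjc u * u * A + conjc u * w * B + conjc w * u * B' + conjc w * w * D) ->
  conjc (-z) * (-z) * A + conjc (-z) * 1 * B + conjc 1 * (-z) * B' + conjc 1 * 1 * D = 0 ->
  Re B = Re A * Re z.
Proof.
move=> hA -> H.
case: A hA H => a a'; case: B => p q; case: D => d d'; case: z => x y /= hA H hF.
have := H (1 +i* 0) (0 +i* 0).
rewrite lecE /= => /andP[_ ha].
have ha0 : a' = 0 by have := congr1 Im hA => /= ; lra.
have h0 := congr1 Re hF; rewrite /= in h0.
have hs : forall s, 0 <= 2*s*(p - a*x) + a*s^+2.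
  move=> s; have := H ((-x+s) +i* (-y)) (1 +i* 0); rewrite lecE /= => /andP[_ h].
  rewrite ha0 in h h0; nra.
have := quad0 _ hs; rewrite ha0 in ha; lra.
Qed.

Lemma sum2 n (i0 i1 : 'I_n) (g : 'I_n -> C) : i0 != i1 ->
  (forall k, k != i0 -> k != i1 -> g k = 0) -> \sum_k g k = g i0 + g i1.
Proof.
move=> ne h; rewrite (bigD1 i0) //= (bigD1 i1) /=; last by rewrite eq_sym.
rewrite big1 ?addr0 // => k /andP[k0 k1]; exact: h.
Qed.

Definition Fm n (t : 'M[C]_n) (i0 i1 : 'I_n) (u w : C) :=
  conjc u * u * t i0 i0 + conjc u * w * t i0 i1 + conjc w * u * t i1 i0 + conjc w * w * t i1 i1.

Lemma psd_Fm n (t : 'M[C]_n) (i0 i1 : 'I_n) : i0 != i1 -> psd t ->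
  forall u w, 0 <= Fm t i0 i1 u w.
Proof.
move=> ne [_ H] u w.
pose v : 'cV[C]_n := \col_k (if k == i0 then u else if k == i1 then w else 0).
have hv : forall k, k != i0 -> k != i1 -> v k 0 = 0.
  by move=> k k0 k1; rewrite mxE (negbTE k0) (negbTE k1).
have := H v; rewrite mxE (sum2 ne); last first.
  by move=> k k0 k1; rewrite hv // mulr0.
rewrite !mxE !(sum2 ne); try by move=> k k0 k1; rewrite !mxE (negbTE k0) (negbTE k1) conjc0 mul0r.
rewrite !mxE !eqxx (eq_sym i1 i0) (negbTE ne) /Fm.
suff -> : (u^* * t i0 i0 + w^* * t i1 i0) * u + (u^* * t i0 i1 + w^* * t i1 i1) * w =
   u^* * u * t i0 i0 + u^* * w * t i0 i1 + w^* * u * t i1 i0 + w^* * w * t i1 i1 by [].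
ring.
Qed.

Lemma Fm_lin n k (c : 'I_k -> C) (t : 'I_k -> 'M[C]_n) i0 i1 u w :
  Fm (\sum_j c j *: t j) i0 i1 u w = \sum_j c j * Fm (t j) i0 i1 u w.
Proof.
have e : forall a b, (\sum_j c j *: t j) a b = \sum_j c j * t j a b.
  by move=> a b; rewrite summxE; apply eq_bigr => j _; rewrite mxE.
rewrite /Fm !e !mulr_sumr -!big_split /=; apply eq_bigr => j _; ring.
Qed.

Lemma key n (t : 'M[C]_n) (i0 i1 : 'I_n) (z : C) : i0 != i1 -> psd t ->
  Fm t i0 i1 (-z) 1 = 0 -> Re (t i0 i1) = Re (t i0 i0) * Re z.
Proof.
move=> ne pt hF; apply: key_c (psd_Fm ne pt) hF.
  by have := congr1 (fun M : 'M[C]_n => M i0 i0) pt.1; rewrite /adjmx !mxE.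
by have := congr1 (fun M : 'M[C]_n => M i1 i0) pt.1; rewrite /adjmx !mxE.
Qed.

Definition zp (m : nat) : C :=
  (2 / (1 + (m%:R)^+2) - 1) +i* (2 * m%:R / (1 + (m%:R)^+2)).

Lemma zp_circle m : on_circle (zp m).
Proof.
rewrite /on_circle normc_def /zp /=.
have hD : (1 + (m%:R : R)^+2) != 0 by rewrite gt_eqF // ltr_pwDl // sqr_ge0.
suff -> : (2 / (1 + (m%:R)^+2) - 1) ^+ 2 + (2 * m%:R / (1 + (m%:R : R)^+2)) ^+ 2 = 1
  by rewrite sqrtr1.
by field.
Qed.

Lemma zp_inj m m' : Re (zp m) = Re (zp m') -> m = m'.
Proof.
rewrite /zp /= => h.
have hD : forall m : nat, (1 + (m%:R : R)^+2) != 0.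
  by move=> l; rewrite gt_eqF // ltr_pwDl // sqr_ge0.
have : (1 + (m%:R : R)^+2) = 1 + (m'%:R)^+2.
  have h2 : 2 * (1 + (m%:R : R)^+2)^-1 = 2 * (1 + (m'%:R)^+2)^-1 by lra.
  have h20 : (2 : R) != 0 by rewrite pnatr_eq0.
  by have := mulfI h20 h2 => /invr_inj.
move=> /addrI /eqP; rewrite -!natrX eqr_nat eqn_exp2r //.
by move=> /eqP.
Qed.
End Aux.

Unset Implicit Arguments.
Local Close Scope complex_scope.

Theorem corollary7p7 (R : realType) (n : nat) (hn : (2 <= n)%N) :
  (forall z : R[i], on_circle z -> psd (xi n z)) /\
  ~ (exists (k : nat) (t : 'I_k -> 'M[R[i]]_n) (f : 'I_k -> R[i] -> R[i]),
       (forall j, toeplitz (t j) /\ psd (t j)) /\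
       (forall j, trig_poly n (f j) /\ forall z, on_circle z -> 0 <= f j z) /\
       (forall z, on_circle z -> xi n z = \sum_(j < k) f j z *: t j)).
Proof.
split; first by move=> z; apply: xi_psd.
move=> [k [t [f [ht [hf hxi]]]]].
have n0 : (0 < n)%N by apply: ltnW.
pose i0 := Ordinal n0 : 'I_n; pose i1 := Ordinal hn : 'I_n.
have ne : i0 != i1 by [].
have hzero : forall z j, on_circle z -> f j z != 0 ->
    complex.Re (t j i0 i1) = complex.Re (t j i0 i0) * complex.Re z.
  move=> z j hz fz; apply: (key ne (ht j).2).
  have hsum := congr1 (fun M => Fm M i0 i1 (-z) 1) (hxi z hz); rewrite /= Fm_lin in hsum.
  have hz0 := circle_neq0 hz.
  have hx : Fm (xi n z) i0 i1 (-z) 1 = 0.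
    rewrite /Fm !mxE /= !subrr !expr0z subr0 sub0r expr1z exprN1 oppr0.
    rewrite -[(1 +i* 0)%C]/(1 : R[i]) !mulr1 !mul1r mulNr (mulfV hz0).
    ring.
  rewrite hx in hsum.
  have hpos : forall j, true -> 0 <= f j z * Fm (t j) i0 i1 (-z) 1.
    by move=> l _; apply: mulr_ge0; [exact: (hf l).2 | exact: (psd_Fm ne (ht l).2 (-z) 1)].
  have := psumr_eq0P hpos (esym hsum) (i := j) isT.
  by move/eqP; rewrite mulf_eq0 (negbTE fz) /= => /eqP.
pose P (j : 'I_k) (m : 'I_k.+1) :=
  (complex.Re (t j i0 i0) != 0) && (f j (zp R m) != 0).
have huniq : forall j m m', P j m -> P j m' -> m = m'.
  move=> j m m' /andP[a0 f1] /andP[_ f2].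
  have e1 := hzero _ _ (zp_circle R m) f1; have e2 := hzero _ _ (zp_circle R m') f2.
  have : complex.Re (zp R m) = complex.Re (zp R m').
    by apply: (mulfI a0); rewrite -e1 -e2.
  by move=> /zp_inj e; apply: val_inj.
have [m hm] : exists m : 'I_k.+1, forall j, ~~ P j m.
  case: (boolP [exists m, [forall j, ~~ P j m]]) => [/existsP [m /forallP hm] | hno].
    by exists m.
  exfalso.
  have hall : forall m, exists j, P j m.
    move=> m; move: hno; rewrite negb_exists => /forallP /(_ m).
    by rewrite negb_forall => /existsP [j]; rewrite negbK; exists j.
  have [j0 _] := hall ord0.
  pose h m := odflt j0 [pick j | P j m].
  have hP : forall m, P (h m) m.
    move=> m; rewrite /h; case: pickP => [j //|none].
    by have [j pj] := hall m; rewrite none in pj.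
  have hinj : injective h.
    by move=> m m' e; apply: (huniq (h m)); [apply: hP | rewrite e; apply: hP].
  by have := leq_card _ hinj; rewrite !card_ord ltnn.
have hz := zp_circle R m.
have := congr1 (fun M : 'M[R[i]]_n => M i0 i0) (hxi _ hz).
rewrite /= summxE !mxE /= subrr expr0z big1 ?oner_eq0 //.
  by move=> /eqP; rewrite oner_eq0.
move=> j _; rewrite mxE.
have := hm j; rewrite negb_and !negbK => /orP [ha | /eqP ->]; last by rewrite mul0r.
have hh := congr1 (fun M : 'M[R[i]]_n => M i0 i0) (ht j).2.1.
rewrite /adjmx !mxE in hh.
suff -> : t j i0 i0 = 0 by rewrite mulr0.
move: ha hh; case: (t j i0 i0) => a a' /= /eqP -> hh.
have ha' : a' = 0 by have := congr1 (@complex.Im R) hh => /=; lra.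
by rewrite ha'.
Qed.
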